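(* Let $h$ be a decreasing solution to the HJB equation. Then there is no non-empty interval $(a,b)\subset[0,\infty)$ such that $h''(z)=0$ for all $z\in(a,b)$.
   Context: Fix $\mu\in\mathbb R$, $\sigma>0$, $u_0>0$, $r>0$, $\beta>0$, $d>0$. The HJB equation is $$-rh(z)-\mu h'(z)+\tfrac{\sigma^2}{2}h''(z)+\sup_{u\in[0,u_0]}\{(\beta+h'(z))u\}=\mathbf 1_{\{z>d\}}.$$ A solution to the HJB equation is a function $h:[0,\infty)\to[\frac{\beta u_0-1}{r},\frac{\beta u_0}{r}]$ that is continuously differentiable on $[0,\infty)$, twice continuously differentiable on $[0,d]$ and on $(d,\infty)$ respectively (with $h'(0),h''(0)$ the right derivatives and $h''(d)$ the left second derivative), and satisfies the HJB equation for all $z\ge0$. *)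

(* Defs.v *)
From Stdlib Require Import Reals.
From Coquelicot Require Import Coquelicot.
Open Scope R_scope.

Definition right_deriv (f : R -> R) (x l : R) : Prop :=
  filterlim (fun t => (f t - f x) / (t - x)) (at_right x) (locally l).

Definition left_deriv (f : R -> R) (x l : R) : Prop :=
  filterlim (fun t => (f t - f x) / (t - x)) (at_left x) (locally l).

Definition right_cont (f : R -> R) (x : R) : Prop :=
  filterlim f (at_right x) (locally (f x)).

Definition left_cont (f : R -> R) (x : R) : Prop :=
  filterlim f (at_left x) (locally (f x)).

Definition sup_ctrl (u0 c : R) : R :=
  real (Lub_Rbar (fun v => exists u, 0 <= u <= u0 /\ v = c * u)).

Definition indic_gt (d z : R) : R := if Rlt_dec d z then 1 else 0.

(* h is a solution of the HJB equation, with h1 = h' and h2 = h''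
   (one-sided at 0, h2 d the left second derivative). Only values on [0,oo) matter. *)
Definition HJB_solution (mu sigma u0 r beta d : R) (h h1 h2 : R -> R) : Prop :=
  (forall z, 0 <= z -> (beta * u0 - 1) / r <= h z <= beta * u0 / r) /\
  right_deriv h 0 (h1 0) /\
  (forall z, 0 < z -> is_derive h z (h1 z)) /\
  right_cont h1 0 /\
  (forall z, 0 < z -> continuous h1 z) /\
  right_deriv h1 0 (h2 0) /\
  (forall z, 0 < z < d -> is_derive h1 z (h2 z)) /\
  left_deriv h1 d (h2 d) /\
  right_cont h2 0 /\
  (forall z, 0 < z < d -> continuous h2 z) /\
  left_cont h2 d /\
  (forall z, d < z -> is_derive h1 z (h2 z)) /\
  (forall z, d < z -> continuous h2 z) /\
  (forall z, 0 <= z ->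
     - r * h z - mu * h1 z + sigma ^ 2 / 2 * h2 z + sup_ctrl u0 (beta + h1 z)
     = indic_gt d z).

Definition decreasing_on_nonneg (h : R -> R) : Prop :=
  forall x y, 0 <= x -> x <= y -> h y <= h x.

(* Main.v *)
Require Import Defs.
From Stdlib Require Import Reals Lra Classical.
From Coquelicot Require Import Coquelicot.
Open Scope R_scope.

Lemma cont_eps (f : R -> R) x : continuous f x ->
  forall eps, 0 < eps -> exists delta, 0 < delta /\
    forall y, Rabs (y - x) < delta -> Rabs (f y - f x) < eps.
Proof.
  intros Hc eps He.
  destruct (proj1 (filterlim_locally f (f x)) Hc (mkposreal eps He)) as [del Hd].
  exists del; split; [apply cond_pos|].
  intros y Hy. apply (Hd y). exact Hy.
Qed.

Lemma deriv_cont (f : R -> R) x l : is_derive f x l -> continuous f x.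
Proof. intros H. apply (ex_derive_continuous (V:=R_NormedModule)). exists l. exact H. Qed.

Lemma cont_pt (f : R -> R) x : continuous f x -> continuity_pt f x.
Proof. intros H. apply continuity_pt_filterlim. exact H. Qed.

Lemma MVT_open (f df : R -> R) a b : a < b ->
  (forall c, a < c < b -> is_derive f c (df c)) ->
  (forall c, a <= c <= b -> continuity_pt f c) ->
  exists c, a < c < b /\ f b - f a = df c * (b - a).
Proof.
  intros Hab Hd Hc.
  set (pr1 := fun c (P : a < c < b) =>
     exist (fun l => derivable_pt_abs f c l) (df c) (proj1 (is_derive_Reals f c (df c)) (Hd c P))).
  set (pr2 := fun c (P : a < c < b) => derivable_pt_id c).
  destruct (MVT f id a b pr1 pr2 Hab Hc (fun c _ => derivable_continuous_pt _ _ (derivable_pt_id c))) as [c [P E]].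
  exists c; split; [exact P|].
  rewrite (derive_pt_eq_0 f c (df c) (pr1 c P)) in E.
  2: apply is_derive_Reals, Hd, P.
  rewrite (derive_pt_eq_0 id c 1 (pr2 c P)) in E.
  2: apply derivable_pt_lim_id.
  unfold id in E. lra.
Qed.

Lemma const_on (F : R -> R) p q : (forall z, p < z < q -> is_derive F z 0) ->
  forall x y, p < x < q -> p < y < q -> F x = F y.
Proof.
  intros Hd x y Hx Hy.
  destruct (Rtotal_order x y) as [Hl|[He|Hl]].
  - destruct (MVT_open F (fun _ => 0) x y Hl) as [c [_ E]].
    + intros c Hc; apply Hd; lra.
    + intros c Hc; apply cont_pt, (deriv_cont _ _ 0), Hd; lra.
    + lra.
  - subst; reflexivity.
  - destruct (MVT_open F (fun _ => 0) y x Hl) as [c [_ E]].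
    + intros c Hc; apply Hd; lra.
    + intros c Hc; apply cont_pt, (deriv_cont _ _ 0), Hd; lra.
    + lra.
Qed.

Lemma decr_deriv (f : R -> R) x l : (forall y, x <= y -> f y <= f x) ->
  is_derive f x l -> l <= 0.
Proof.
  intros Hdec Hd. apply is_derive_Reals in Hd.
  destruct (Rle_or_lt l 0) as [?|Hl]; [assumption|exfalso].
  destruct (Hd l Hl) as [del Hdel].
  assert (Hp : 0 < del / 2) by (generalize (cond_pos del); lra).
  specialize (Hdel (del/2) ltac:(lra)).
  rewrite Rabs_pos_eq in Hdel by lra.
  specialize (Hdel ltac:(generalize (cond_pos del); lra)).
  assert (Hq : (f (x + del/2) - f x) / (del/2) <= 0).
  { unfold Rdiv. apply Rmult_le_0_r.
    - specialize (Hdec (x + del/2) ltac:(lra)). lra.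
    - left; apply Rinv_0_lt_compat; lra. }
  apply Rabs_def2 in Hdel. lra.
Qed.




Lemma sup_ctrl_pos u0 c : 0 < u0 -> 0 < c -> sup_ctrl u0 c = u0 * c.
Proof.
  intros Hu Hc. unfold sup_ctrl.
  rewrite (is_lub_Rbar_unique _ (Finite (u0 * c))); [reflexivity|].
  split.
  - intros v [u [Hu' ->]]. simpl. nra.
  - intros b Hb. rewrite Rmult_comm. apply (Hb (c * u0)). exists u0. split; [lra|ring].
Qed.

Lemma ODE_zero (A B : R) (g g1 g2 : R -> R) p q s : p < s < q -> 0 <= A ->
  (forall z, p < z < q -> is_derive g z (g1 z) /\ is_derive g1 z (g2 z) /\
     g2 z = A * g z + B * g1 z) ->
  g s = 0 -> g1 s = 0 -> forall z, p < z < q -> g z = 0.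
Proof.
  intros Hs HA Hz Hg Hg1.
  set (S := sqrt (B*B + 4*A)).
  assert (HS : S * S = B*B + 4*A) by (apply sqrt_sqrt; nra).
  set (la := (B + S)/2). set (m := B - la).
  assert (Hla : m * la = - A) by (unfold m, la; nra).
  set (F := fun z => (g1 z - la * g z) * exp (- m * z)).
  assert (HF : forall z, p < z < q -> is_derive F z 0).
  { intros z Hz'. destruct (Hz z Hz') as [D1 [D2 E]].
    unfold F.
    evar (dd : R).
    replace 0 with dd.
    - apply (is_derive_mult (fun z => g1 z - la * g z) (fun z => exp (- m * z))).
      + apply (is_derive_minus g1 (fun z => la * g z)); [exact D2|].
        apply (is_derive_scal g z la (g1 z)); exact D1.
      + apply (is_derive_comp exp (fun z => - m * z)). apply is_derive_exp.
        apply (is_derive_scal (fun z => z) z (- m) 1). apply (@is_derive_id R_AbsRing).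
      + intros; apply Rmult_comm.
    - unfold dd. simpl. unfold plus, mult, minus, opp, scal; simpl.
      unfold mult, plus, opp; simpl. unfold plus, opp, mult; simpl. rewrite E.
      replace (A * g z + B * g1 z + - (la * g1 z))
        with (m * (g1 z - la * g z)) by (unfold m in *; nra).
      ring. }
  assert (Hw : forall z, p < z < q -> g1 z - la * g z = 0).
  { intros z Hz'. assert (E := const_on F p q HF z s Hz' Hs).
    unfold F in E. rewrite Hg, Hg1 in E.
    assert (0 < exp (- m * z)) by apply exp_pos. nra. }
  set (G := fun z => g z * exp (- la * z)).
  assert (HG : forall z, p < z < q -> is_derive G z 0).
  { intros z Hz'. destruct (Hz z Hz') as [D1 [D2 E]].
    unfold G.
    evar (dd : R).
    replace 0 with dd.
    - apply (is_derive_mult g (fun z => exp (- la * z))).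
      + exact D1.
      + apply (is_derive_comp exp (fun z => - la * z)). apply is_derive_exp.
        apply (is_derive_scal (fun z => z) z (- la) 1). apply (@is_derive_id R_AbsRing).
      + intros; apply Rmult_comm.
    - unfold dd. simpl. unfold plus, mult, scal; simpl.
      unfold mult; simpl. specialize (Hw z Hz'). 
      replace (g1 z) with (la * g z) by lra. ring. }
  intros z Hz'. assert (E := const_on G p q HG z s Hz' Hs).
  unfold G in E. rewrite Hg in E.
  assert (0 < exp (- la * z)) by apply exp_pos. nra.
Qed.

Lemma loc_const_deriv (f : R -> R) c p q x l : (forall y, p < y < q -> f y = c) ->
  p < x < q -> is_derive f x l -> l = 0.
Proof.
  intros Hc Hx Hd.
  assert (H0 : is_derive f x 0).
  { apply (is_derive_ext_loc (fun _ => c) f).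
    - assert (Ho : locally x (fun y => p < y /\ y < q)).
      { apply (open_and (fun y => p < y) (fun y => y < q)).
        apply open_gt. apply open_lt. exact Hx. }
      apply (filter_imp _ _ (fun y Hy => eq_sym (Hc y Hy)) Ho).
    - apply (@is_derive_const R_AbsRing). }
  rewrite <- (is_derive_unique f x l Hd). apply is_derive_unique. exact H0.
Qed.

Lemma lin_small r m x y eta : 0 < r -> 0 < eta -> eta * (r + Rabs m + 1) <= 1 ->
  Rabs x < eta -> Rabs y < eta -> -1 < r * x + m * y < 1.
Proof.
  intros Hr He Hb Hx Hy.
  assert (Hmy : Rabs (m * y) <= Rabs m * eta).
  { rewrite Rabs_mult. apply Rmult_le_compat_l; [apply Rabs_pos| lra]. }
  apply Rabs_def2 in Hx. apply Rabs_def2 in Hy.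
  assert (Hm : - (Rabs m * eta) <= m * y <= Rabs m * eta).
  { split. - assert (Habs := Rabs_Ropp (m*y)). 
      assert (H := Rle_abs (- (m * y))). lra.
    - assert (H := Rle_abs (m * y)). lra. }
  assert (0 <= Rabs m) by apply Rabs_pos.
  split; nra.
Qed.

Lemma indic_1 d z : d < z -> indic_gt d z = 1.
Proof. intros H; unfold indic_gt; destruct (Rlt_dec d z); lra. Qed.
Lemma indic_0 d z : z <= d -> indic_gt d z = 0.
Proof. intros H; unfold indic_gt; destruct (Rlt_dec d z); lra. Qed.

Theorem lemma2p2 (mu sigma u0 r beta d : R) (h h1 h2 : R -> R) :
  0 < sigma -> 0 < u0 -> 0 < r -> 0 < beta -> 0 < d ->
  HJB_solution mu sigma u0 r beta d h h1 h2 ->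
  decreasing_on_nonneg h ->
  ~ (exists a b, 0 <= a < b /\ forall z, a < z < b -> h2 z = 0).
Proof.
  intros Hsig Hu Hr Hb Hdp HJB Hdec [a [b [Hab H20]]].
  destruct HJB as [Hrange [_ [Hd [_ [Hc1 [_ [Hd1a [_ [_ [_ [_ [Hd1b [_ Heq]]]]]]]]]]]]].
  assert (hc : forall z, 0 < z -> continuous h z).
  { intros z Hz. apply (deriv_cont _ _ (h1 z)), Hd, Hz. }
  assert (h1neg : forall z, 0 < z -> h1 z <= 0).
  { intros z Hz. apply (decr_deriv h z). intros y Hy; apply Hdec; lra. apply Hd, Hz. }
  assert (Hs2 : 0 < sigma ^ 2) by (apply pow_lt; lra).
  assert (Hsup : forall z, 0 <= z -> 0 < beta + h1 z ->
     sigma ^ 2 / 2 * h2 z = indic_gt d z + r * h z + mu * h1 z - u0 * (beta + h1 z)).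
  { intros z Hz Hp. specialize (Heq z Hz). rewrite sup_ctrl_pos in Heq by lra. lra. }
  set (A := 2 * r / sigma ^ 2). set (B := 2 * (mu - u0) / sigma ^ 2).
  assert (HA : 0 <= A) by (unfold A; apply Rlt_le, Rdiv_lt_0_compat; lra).
  assert (Hext : forall p q s I, 0 <= p < s -> s < q ->
     (forall z, p < z < q -> indic_gt d z = I) ->
     (forall z, p < z < q -> is_derive h1 z (h2 z)) ->
     h s = (beta * u0 - I) / r -> h1 s = 0 ->
     exists del, 0 < del /\ forall z, s - del < z < s + del -> h z = (beta * u0 - I) / r).
  { intros p q s I Hps Hsq HI Hd1 Hhs Hh1s.
    destruct (cont_eps h1 s (Hc1 s ltac:(lra)) beta Hb) as [d0 [Hd0 Hd0']].
    set (del := Rmin d0 (Rmin (s - p) (q - s))).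
    assert (Hdel : 0 < del /\ del <= d0 /\ del <= s - p /\ del <= q - s).
    { unfold del. repeat split.
      - apply Rmin_pos; [lra| apply Rmin_pos; lra].
      - apply Rmin_l.
      - eapply Rle_trans; [apply Rmin_r| apply Rmin_l].
      - eapply Rle_trans; [apply Rmin_r| apply Rmin_r]. }
    exists del. split; [lra|].
    intros z Hz.
    assert (Hg := ODE_zero A B (fun z => h z - (beta * u0 - I) / r) h1 h2 (s - del) (s + del) s
      ltac:(lra) HA).
    enough (h z - (beta * u0 - I) / r = 0) by lra.
    apply Hg; [| lra | exact Hh1s | exact Hz].
    intros y Hy. split; [|split].
    - replace (h1 y) with (h1 y - 0) by ring.
      apply (is_derive_minus h (fun _ => (beta * u0 - I) / r)).
      + apply Hd; lra.
      + apply (@is_derive_const R_AbsRing).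
    - apply Hd1; lra.
    - assert (Hy1 : Rabs (h1 y - h1 s) < beta) by (apply Hd0'; apply Rabs_def1; lra).
      rewrite Hh1s in Hy1. apply Rabs_def2 in Hy1.
      assert (E := Hsup y ltac:(lra) ltac:(lra)).
      rewrite (HI y ltac:(lra)) in E.
      replace (h2 y) with (2 / sigma^2 * (sigma^2/2 * h2 y)) by (field; lra).
      rewrite E. unfold A, B. field. lra. }
  assert (Hflat : forall p q I, 0 <= p < q ->
     (forall z, p < z < q -> indic_gt d z = I /\ is_derive h1 z (h2 z) /\ h2 z = 0) ->
     forall z, p < z < q -> h z = (beta * u0 - I) / r /\ h1 z = 0).
  { intros p q I Hpq Hz.
    set (m := (p + q) / 2).
    assert (Hm : p < m < q) by (unfold m; lra).
    assert (Hc : forall x, p < x < q -> h1 x = h1 m).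
    { intros x Hx. apply (const_on h1 p q); [|exact Hx|exact Hm].
      intros y Hy. destruct (Hz y Hy) as [_ [D E]]. rewrite E in D. exact D. }
    assert (Hh : forall x, p < x < q -> h x = h m).
    { intros x Hx.
      assert (E1 := Heq x ltac:(lra)). assert (E2 := Heq m ltac:(lra)).
      destruct (Hz x Hx) as [I1 [_ Z1]]. destruct (Hz m Hm) as [I2 [_ Z2]].
      rewrite I1, Z1 in E1. rewrite I2, Z2 in E2. rewrite (Hc x Hx) in E1.
      apply (Rmult_eq_reg_l r); lra. }
    assert (H10 : forall x, p < x < q -> h1 x = 0).
    { intros x Hx. apply (loc_const_deriv h (h m) p q x); [exact Hh|exact Hx|].
      apply Hd; lra. }
    intros z Hz'. split; [|apply H10, Hz'].
    assert (E := Heq z ltac:(lra)). destruct (Hz z Hz') as [I1 [_ Z1]].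
    rewrite I1, Z1, (H10 z Hz') in E. rewrite Rplus_0_r, sup_ctrl_pos in E by lra.
    apply (Rmult_eq_reg_l r); [|lra]. field_simplify; lra. }
  set (K := (beta * u0 - 1) / r).
  assert (RB : forall z0, d < z0 -> h z0 = K -> False).
  { intros z0 Hz0 Hhz0.
    assert (HK : forall z, z0 <= z -> h z = K).
    { intros z Hz. assert (H1 := Hdec z0 z ltac:(lra) Hz).
      assert (H2 := Hrange z ltac:(lra)). fold K in H2. lra. }
    set (E := fun z => z = d \/ (d <= z /\ K < h z)).
    assert (Hbd : bound E).
    { exists z0. intros z [Hz|[Hz1 Hz2]]; [lra|].
      destruct (Rle_or_lt z z0) as [?|Hlt]; [lra|].
      rewrite (HK z ltac:(lra)) in Hz2. lra. }
    destruct (completeness E Hbd (ex_intro _ d (or_introl eq_refl))) as [s [Hub Hleast]].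
    assert (Hds : d <= s) by (apply Hub; left; reflexivity).
    assert (Hright : forall z, s < z -> h z = K).
    { intros z Hz. assert (H2 := Hrange z ltac:(lra)). fold K in H2.
      destruct (Rle_or_lt (h z) K) as [?|Hlt]; [lra|].
      assert (z <= s) by (apply Hub; right; split; lra). lra. }
    assert (Hleft : forall z, d <= z < s -> K < h z).
    { intros z Hz. destruct (Rle_or_lt (h z) K) as [Hle|?]; [|assumption].
      exfalso. assert (s <= z); [|lra].
      apply Hleast. intros e [He|[He1 He2]]; [lra|].
      destruct (Rle_or_lt e z) as [?|Hlt]; [assumption|].
      assert (h e <= h z) by (apply Hdec; lra). lra. }
    assert (Hhs : h s = K).
    { assert (H2 := Hrange s ltac:(lra)). fold K in H2.
      destruct (Rle_or_lt (h s) K) as [?|Hlt]; [lra|exfalso].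
      destruct (cont_eps h s (hc s ltac:(lra)) (h s - K) ltac:(lra)) as [del [Hdel Hc]].
      specialize (Hc (s + del/2) ltac:(rewrite Rabs_pos_eq; lra)).
      rewrite (Hright (s + del/2) ltac:(lra)) in Hc.
      apply Rabs_def2 in Hc. lra. }
    assert (H1r : forall z, s < z -> h1 z = 0).
    { intros z Hz. apply (loc_const_deriv h K s (z + 1) z); [|lra|apply Hd; lra].
      intros y Hy; apply Hright; lra. }
    assert (H1s : h1 s = 0).
    { destruct (Req_dec (h1 s) 0) as [?|Hne]; [assumption|exfalso].
      destruct (cont_eps h1 s (Hc1 s ltac:(lra)) (Rabs (h1 s)) ltac:(apply Rabs_pos_lt; exact Hne)) as [del [Hdel Hc]].
      specialize (Hc (s + del/2) ltac:(rewrite Rabs_pos_eq; lra)).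
      rewrite (H1r (s + del/2) ltac:(lra)) in Hc.
      rewrite Rminus_0_l, Rabs_Ropp in Hc. lra. }
    destruct (Rle_or_lt s d) as [Hsd|Hsd].
    -
      assert (Hsd' : s = d) by lra. rewrite Hsd' in Hhs, H1s.
      set (eta := Rmin beta (/ (r + Rabs (mu - u0) + 1))).
      assert (Hpos : 0 < r + Rabs (mu - u0) + 1) by (generalize (Rabs_pos (mu - u0)); lra).
      assert (Heta : 0 < eta /\ eta <= beta /\ eta * (r + Rabs (mu - u0) + 1) <= 1).
      { unfold eta. split; [apply Rmin_pos; [lra| apply Rinv_0_lt_compat; lra]|split; [apply Rmin_l|]].
        apply (Rle_trans _ (/ (r + Rabs (mu - u0) + 1) * (r + Rabs (mu - u0) + 1))).
        - apply Rmult_le_compat_r; [lra|apply Rmin_r].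
        - rewrite Rinv_l; lra. }
      destruct (cont_eps h d (hc d Hdp) eta ltac:(lra)) as [d1 [Hd1p Hd1]].
      destruct (cont_eps h1 d (Hc1 d Hdp) eta ltac:(lra)) as [d2 [Hd2p Hd2]].
      set (del := Rmin d (Rmin d1 d2)).
      assert (Hdel : 0 < del /\ del <= d /\ del <= d1 /\ del <= d2).
      { unfold del. repeat split.
        - apply Rmin_pos; [lra| apply Rmin_pos; lra].
        - apply Rmin_l.
        - eapply Rle_trans; [apply Rmin_r| apply Rmin_l].
        - eapply Rle_trans; [apply Rmin_r| apply Rmin_r]. }
      set (w := d - del / 2).
      destruct (MVT_open h1 h2 w d ltac:(unfold w; lra)) as [c [Hc Ec]].
      + intros c Hc. apply Hd1a. unfold w in Hc. lra.
      + intros c Hc. apply cont_pt, Hc1. unfold w in Hc. lra.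
      + unfold w in Hc.
        assert (Ha := Hd1 c ltac:(apply Rabs_def1; lra)).
        assert (Hb1 := Hd2 c ltac:(apply Rabs_def1; lra)).
        rewrite Hhs in Ha. rewrite H1s, Rminus_0_r in Hb1.
        assert (Hb2 := Hb1). apply Rabs_def2 in Hb2.
        assert (Eq := Hsup c ltac:(lra) ltac:(lra)).
        rewrite indic_0 in Eq by lra.
        assert (Hsm := lin_small r (mu - u0) (h c - K) (h1 c) eta Hr ltac:(lra) ltac:(lra) Ha Hb1).
        assert (HrK : r * K = beta * u0 - 1) by (unfold K; field; lra).
        assert (Hneg : sigma ^ 2 / 2 * h2 c < 0) by nra.
        assert (Hh2 : h2 c < 0) by nra.
        assert (Hw := h1neg w ltac:(unfold w; lra)).
        rewrite H1s in Ec. unfold w in Ec, Hw. nra.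
    - destruct (Hext d (s + 1) s 1 ltac:(lra) ltac:(lra)) as [del [Hdel Hc]].
      + intros z Hz. apply indic_1; lra.
      + intros z Hz. apply Hd1b; lra.
      + exact Hhs.
      + exact H1s.
      + set (z := s - Rmin del (s - d) / 2).
        assert (Hm : 0 < Rmin del (s - d) /\ Rmin del (s - d) <= del /\ Rmin del (s - d) <= s - d).
        { split; [apply Rmin_pos; lra| split; [apply Rmin_l|apply Rmin_r]]. }
        assert (Hz1 := Hc z ltac:(unfold z; lra)).
        assert (Hz2 := Hleft z ltac:(unfold z; lra)). fold K in Hz1. lra. }
  set (U := (beta * u0 - 0) / r).
  assert (RA : forall z0, 0 < z0 < d -> h z0 = U -> False).
  { intros z0 Hz0 Hhz0.
    assert (HU : forall z, 0 <= z <= z0 -> h z = U).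
    { intros z Hz. assert (H1 := Hdec z z0 ltac:(lra) ltac:(lra)).
      assert (H2 := Hrange z ltac:(lra)).
      replace (beta * u0 / r) with U in H2 by (unfold U; field; lra). lra. }
    set (E := fun z => 0 <= z <= d /\ h z = U).
    assert (Hbd : bound E) by (exists d; intros z [Hz _]; lra).
    assert (Hz0E : E z0) by (split; [lra|exact Hhz0]).
    destruct (completeness E Hbd (ex_intro _ z0 Hz0E)) as [t [Hub Hleast]].
    assert (Hzt : z0 <= t) by (apply Hub; split; [lra|exact Hhz0]).
    assert (Htd : t <= d) by (apply Hleast; intros z [Hz _]; lra).
    assert (Hlt : forall z, 0 <= z < t -> h z = U).
    { intros z Hz. 
      assert (Hex : exists e, E e /\ z < e).
      { destruct (Classical_Prop.classic (exists e, E e /\ z < e)) as [?|Hn]; [assumption|].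
        exfalso. assert (t <= z); [|lra]. apply Hleast. intros e He.
        destruct (Rle_or_lt e z) as [?|Hl]; [assumption|]. exfalso; apply Hn; exists e; auto. }
      destruct Hex as [e [[He1 He2] Hze]].
      assert (H1 := Hdec z e ltac:(lra) ltac:(lra)).
      assert (H2 := Hrange z ltac:(lra)).
      replace (beta * u0 / r) with U in H2 by (unfold U; field; lra). lra. }
    assert (Hgt : forall z, t < z <= d -> h z < U).
    { intros z Hz. assert (H2 := Hrange z ltac:(lra)).
      replace (beta * u0 / r) with U in H2 by (unfold U; field; lra).
      destruct (Rle_or_lt U (h z)) as [Hle|?]; [|assumption].
      assert (z <= t) by (apply Hub; split; lra). lra. }
    assert (Hht : h t = U).
    { assert (H2 := Hrange t ltac:(lra)).
      replace (beta * u0 / r) with U in H2 by (unfold U; field; lra).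
      destruct (Rle_or_lt U (h t)) as [?|Hl]; [lra|exfalso].
      destruct (cont_eps h t (hc t ltac:(lra)) (U - h t) ltac:(lra)) as [del [Hdel Hc]].
      assert (Hm : 0 < Rmin del t /\ Rmin del t <= del /\ Rmin del t <= t).
      { split; [apply Rmin_pos; lra| split; [apply Rmin_l|apply Rmin_r]]. }
      specialize (Hc (t - Rmin del t / 2) ltac:(apply Rabs_def1; lra)).
      rewrite (Hlt (t - Rmin del t / 2) ltac:(lra)) in Hc.
      apply Rabs_def2 in Hc. lra. }
    assert (H1l : forall z, 0 < z < t -> h1 z = 0).
    { intros z Hz. apply (loc_const_deriv h U 0 t z); [|lra|apply Hd; lra].
      intros y Hy; apply Hlt; lra. }
    assert (H1t : h1 t = 0).
    { destruct (Req_dec (h1 t) 0) as [?|Hne]; [assumption|exfalso].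
      destruct (cont_eps h1 t (Hc1 t ltac:(lra)) (Rabs (h1 t)) ltac:(apply Rabs_pos_lt; exact Hne)) as [del [Hdel Hc]].
      assert (Hm : 0 < Rmin del t /\ Rmin del t <= del /\ Rmin del t <= t).
      { split; [apply Rmin_pos; lra| split; [apply Rmin_l|apply Rmin_r]]. }
      specialize (Hc (t - Rmin del t / 2) ltac:(apply Rabs_def1; lra)).
      rewrite (H1l (t - Rmin del t / 2) ltac:(lra)) in Hc.
      rewrite Rminus_0_l, Rabs_Ropp in Hc. lra. }
    destruct (Rle_or_lt d t) as [Htd'|Htd'].
    - assert (Hsd' : t = d) by lra. rewrite Hsd' in Hht, H1t.
      set (eta := Rmin beta (/ (r + Rabs (mu - u0) + 1))).
      assert (Hpos : 0 < r + Rabs (mu - u0) + 1) by (generalize (Rabs_pos (mu - u0)); lra).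
      assert (Heta : 0 < eta /\ eta <= beta /\ eta * (r + Rabs (mu - u0) + 1) <= 1).
      { unfold eta. split; [apply Rmin_pos; [lra| apply Rinv_0_lt_compat; lra]|split; [apply Rmin_l|]].
        apply (Rle_trans _ (/ (r + Rabs (mu - u0) + 1) * (r + Rabs (mu - u0) + 1))).
        - apply Rmult_le_compat_r; [lra|apply Rmin_r].
        - rewrite Rinv_l; lra. }
      destruct (cont_eps h d (hc d Hdp) eta ltac:(lra)) as [d1 [Hd1p Hd1]].
      destruct (cont_eps h1 d (Hc1 d Hdp) eta ltac:(lra)) as [d2 [Hd2p Hd2]].
      set (del := Rmin d1 d2).
      assert (Hdel : 0 < del /\ del <= d1 /\ del <= d2).
      { unfold del. repeat split; [apply Rmin_pos; lra|apply Rmin_l|apply Rmin_r]. }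
      set (w := d + del / 2).
      destruct (MVT_open h1 h2 d w ltac:(unfold w; lra)) as [c [Hc Ec]].
      + intros c Hc. apply Hd1b. unfold w in Hc. lra.
      + intros c Hc. apply cont_pt, Hc1. unfold w in Hc. lra.
      + unfold w in Hc.
        assert (Ha := Hd1 c ltac:(apply Rabs_def1; lra)).
        assert (Hb1 := Hd2 c ltac:(apply Rabs_def1; lra)).
        rewrite Hht in Ha. rewrite H1t, Rminus_0_r in Hb1.
        assert (Hb2 := Hb1). apply Rabs_def2 in Hb2.
        assert (Eq := Hsup c ltac:(lra) ltac:(lra)).
        rewrite indic_1 in Eq by lra.
        assert (Hsm := lin_small r (mu - u0) (h c - U) (h1 c) eta Hr ltac:(lra) ltac:(lra) Ha Hb1).
        assert (HrU : r * U = beta * u0) by (unfold U; field; lra).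
        assert (Hneg : 0 < sigma ^ 2 / 2 * h2 c) by nra.
        assert (Hh2 : 0 < h2 c) by nra.
        assert (Hw := h1neg w ltac:(unfold w; lra)).
        rewrite H1t in Ec. unfold w in Ec, Hw. nra.
    - destruct (Hext 0 d t 0 ltac:(lra) ltac:(lra)) as [del [Hdel Hc]].
      + intros z Hz. apply indic_0; lra.
      + intros z Hz. apply Hd1a; lra.
      + exact Hht.
      + exact H1t.
      + set (z := t + Rmin del (d - t) / 2).
        assert (Hm : 0 < Rmin del (d - t) /\ Rmin del (d - t) <= del /\ Rmin del (d - t) <= d - t).
        { split; [apply Rmin_pos; lra| split; [apply Rmin_l|apply Rmin_r]]. }
        assert (Hz1 := Hc z ltac:(unfold z; lra)).
        assert (Hz2 := Hgt z ltac:(unfold z; lra)). fold U in Hz1. lra. }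
  destruct (Rle_or_lt d a) as [Hda|Hda].
  - assert (F := Hflat a b 1 ltac:(lra)).
    destruct (F ltac:(intros z Hz; split; [apply indic_1; lra|split; [apply Hd1b; lra|apply H20; lra]]) ((a+b)/2) ltac:(lra)) as [F1 _].
    apply (RB ((a+b)/2)); [lra|exact F1].
  - set (q := Rmin b d).
    assert (Hq : a < q /\ q <= b /\ q <= d) by (unfold q; split; [apply Rmin_glb_lt; lra|split; [apply Rmin_l|apply Rmin_r]]).
    assert (F := Hflat a q 0 ltac:(lra)).
    destruct (F ltac:(intros z Hz; split; [apply indic_0; lra|split; [apply Hd1a; lra|apply H20; lra]]) ((a+q)/2) ltac:(lra)) as [F1 _].
    apply (RA ((a+q)/2)); [lra|exact F1].
Qed.
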